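(* Let $r=\dfrac{4(3s^2-4s+2)}{s^2+4s+6}$ and $$y=\frac{(s+1)(7s^4+16s^3+4s^2-4)\,r}{s^3(s-2)(s^4-4s^2+32s-28)},\qquad t=\left(\frac{(s+1)^2\,r}{(s-2)^2s^2}\right)^2.$$ Then $y(t)$ is a solution of $\mathrm{P}_{\mathrm{VI}}$ with parameters $(\theta_1,\theta_2,\theta_3,\theta_4)=(1/3,1/2,1/2,2/3)$.
   Context: $\mathrm{P}_{\mathrm{VI}}$ is the equation $$\frac{d^2y}{dt^2}=\frac12\Big(\frac1y+\frac1{y-1}+\frac1{y-t}\Big)\Big(\frac{dy}{dt}\Big)^2-\Big(\frac1t+\frac1{t-1}+\frac1{y-t}\Big)\frac{dy}{dt}+\frac{y(y-1)(y-t)}{t^2(t-1)^2}\Big(\alpha+\beta\frac{t}{y^2}+\gamma\frac{t-1}{(y-1)^2}+\delta\frac{t(t-1)}{(y-t)^2}\Big),$$ with $\alpha=(\theta_4-1)^2/2$, $\beta=-\theta_1^2/2$, $\gamma=\theta_3^2/2$, $\delta=(1-\theta_2^2)/2$. When $y,t$ are given as rational functions of a parameter on a curve, derivatives with respect to $t$ are computed via the chain rule. *)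

(* Defs.v *)
From Stdlib Require Import Reals.
From Coquelicot Require Import Coquelicot.
Open Scope R_scope.

Definition PVI_rhs (th1 th2 th3 th4 t y y1 : R) : R :=
  let alpha := (th4 - 1)^2 / 2 in
  let beta := - th1^2 / 2 in
  let gamma := th3^2 / 2 in
  let delta := (1 - th2^2) / 2 in
  1/2 * (1/y + 1/(y-1) + 1/(y-t)) * y1^2
  - (1/t + 1/(t-1) + 1/(y-t)) * y1
  + y*(y-1)*(y-t)/(t^2*(t-1)^2) *
    (alpha + beta * t / y^2 + gamma * (t-1)/(y-1)^2 + delta * t*(t-1)/(y-t)^2).

(* The curve s |-> (t(s), y(s)) satisfies P_VI at parameter value s, where
   d/dt is computed by the chain rule: dy/dt = y'(s)/t'(s),
   d^2y/dt^2 = (d/ds (y'(s)/t'(s))) / t'(s). *)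
Definition PVI_param_holds (th1 th2 th3 th4 : R) (T Y : R -> R) (s : R) : Prop :=
  let y1 := Derive Y s / Derive T s in
  let y2 := Derive (fun u => Derive Y u / Derive T u) s / Derive T s in
  y2 = PVI_rhs th1 th2 th3 th4 (T s) (Y s) y1.

Definition r10 (s : R) : R := 4 * (3*s^2 - 4*s + 2) / (s^2 + 4*s + 6).

Definition y10 (s : R) : R :=
  (s+1) * (7*s^4 + 16*s^3 + 4*s^2 - 4) * r10 s
  / (s^3 * (s-2) * (s^4 - 4*s^2 + 32*s - 28)).

Definition t10 (s : R) : R :=
  ((s+1)^2 * r10 s / ((s-2)^2 * s^2))^2.

(* Main.v *)
Require Import Defs.
From Stdlib Require Import Reals Lra Psatz.
From Coquelicot Require Import Coquelicot.
Open Scope R_scope.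

Definition Ep (u : R) : R := ((32256) + (-63488)*u + (3840)*u^2 + (49152)*u^3 + (-7808)*u^4 + (-53760)*u^5 + (175296)*u^6 + (12288)*u^7 + (-87648)*u^8 + (-13440)*u^9 + (976)*u^10 + (3072)*u^11 + (-120)*u^12 + (-992)*u^13 + (-252)*u^14).
Definition W1p (u : R) : R := ((133177540608) + (-860369190912)*u + (2466426912768)*u^2 + (-4354492858368)*u^3 + (6113810448384)*u^4 + (-9412949311488)*u^5 + (19593003270144)*u^6 + (-34456442241024)*u^7 + (34272590168064)*u^8 + (-13156686495744)*u^9 + (-3071191547904)*u^10 + (269425311744)*u^11 + (6279058685952)*u^12 + (-5398297313280)*u^13 + (1387546804224)*u^14 + (1105770577920)*u^15 + (-2149059723264)*u^16 + (945193353216)*u^17 + (506658914304)*u^18 + (-358887456768)*u^19 + (24429428736)*u^20 + (13130366976)*u^21 + (-12359663616)*u^22 + (-4158259200)*u^23 + (4320915456)*u^24 + (2131107840)*u^25 + (-821262336)*u^26 + (-416514048)*u^27 + (62128128)*u^28 + (31291392)*u^29 + (556032)*u^30 + (774144)*u^31 + (145152)*u^32).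
Definition C0p (u : R) : R := u^6 + 2*u^5 + 2*u^4 + 8*u^3 - 4*u^2 + 8*u - 8.
Definition Y1 (u : R) : R := Ep u / (u^4*(u-2)^2*(u^4 - 4*u^2 + 32*u - 28)^2*(u^2 + 4*u + 6)^2).
Definition T1 (u : R) : R := -192*(u+1)^3*(3*u^2 - 4*u + 2)*C0p u/(u^5*(u-2)^5*(u^2 + 4*u + 6)^3).
Definition W (u : R) : R := Y1 u / T1 u.
Definition W1 (u : R) : R := W1p u / (36864 * C0p u^2 * (u^4 - 4*u^2 + 32*u - 28)^3 * (u+1)^4 * (3*u^2 - 4*u + 2)^2).


Ltac nzatom := match goal with |- ?e <> 0 => first [ exact R1_neq_R0 | assumption
  | (let Hx := fresh in intro Hx; match goal with H : ?q <> 0 |- _ => apply H; transitivity e; [ring | exact Hx] end)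
  | (let Hx := fresh in intro Hx; match goal with H : ?a <> ?b |- _ => apply H; lra end) ] end.
Ltac nz := repeat split; repeat (first [apply Rmult_integral_contrapositive_currified | apply pow_nonzero | apply Rinv_neq_0_compat]); nzatom.

Lemma Dnz u : u^2 + 4*u + 6 <> 0. Proof. assert (0 <= (u+2)^2) by (apply pow2_ge_0). nra. Qed.
Lemma Anz u : 3*u^2 - 4*u + 2 <> 0. Proof. assert (0 <= (3*u-2)^2) by (apply pow2_ge_0). nra. Qed.

Lemma dY u : u <> 0 -> u <> 2 -> u^4 - 4*u^2 + 32*u - 28 <> 0 -> is_derive y10 u (Y1 u).
Proof.
  intros H0 H2 HQ. pose proof (Dnz u) as HD. assert (H2' : u - 2 <> 0) by lra.
  unfold y10, r10, Y1, Ep. auto_derive.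
  - nz.
  - field; nz.
Qed.
Lemma dT u : u <> 0 -> u <> 2 -> is_derive t10 u (T1 u).
Proof.
  intros H0 H2. pose proof (Dnz u) as HD. assert (H2' : u - 2 <> 0) by lra.
  unfold t10, r10, T1, C0p. auto_derive.
  - nz.
  - field; nz.
Qed.

Lemma loc_nz (f : R -> R) x : ex_derive f x -> f x <> 0 -> locally x (fun u => f u <> 0).
Proof.
  intros Hd Hf. apply ex_derive_continuous in Hd.
  apply (Hd (fun y => y <> 0)).
  exists (mkposreal _ (Rabs_pos_lt _ Hf)). intros y Hy Hy0.
  change (Rabs (y - f x) < Rabs (f x)) in Hy. rewrite Hy0 in Hy.
  rewrite Rminus_0_l, Rabs_Ropp in Hy. lra.
Qed.

Lemma dW u : u <> 0 -> u <> 2 -> u^4 - 4*u^2 + 32*u - 28 <> 0 -> u + 1 <> 0 -> C0p u <> 0 ->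
  is_derive W u (W1 u).
Proof.
  intros H0 H2 HQ H1 HC. pose proof (Dnz u) as HD. pose proof (Anz u) as HA.
  unfold W, Y1, T1, W1, W1p, Ep, C0p in *. auto_derive.
  - nz.
  - field; nz.
Qed.

Definition POLY (t y y1 y2 : R) : R :=
  72*y*(y-1)*(y-t)*t^2*(t-1)^2*y2
  - 36*t^2*(t-1)^2*((y-1)*(y-t) + y*(y-t) + y*(y-1))*y1^2
  + 72*y*(y-1)*t*(t-1)*((t-1)*(y-t) + t*(y-t) + t*(t-1))*y1
  - (4*y^2*(y-1)^2*(y-t)^2 - 4*t*(y-1)^2*(y-t)^2 + 9*(t-1)*y^2*(y-t)^2
     + 27*t*(t-1)*y^2*(y-1)^2).

Lemma stage1 t y y1 y2 : y <> 0 -> y <> 1 -> y <> t -> t <> 0 -> t <> 1 ->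
  POLY t y y1 y2 = 0 -> y2 = PVI_rhs (1/3) (1/2) (1/2) (2/3) t y y1.
Proof.
  intros H0 H1 Ht H3 H4 HP.
  assert (A1 : y - 1 <> 0) by (intro; apply H1; lra).
  assert (A2 : y - t <> 0) by (intro; apply Ht; lra).
  assert (A3 : t - 1 <> 0) by (intro; apply H4; lra).
  apply Rminus_diag_uniq.
  transitivity (POLY t y y1 y2 / (72*y*(y-1)*(y-t)*t^2*(t-1)^2)).
  - unfold POLY, PVI_rhs. field. repeat split; auto.
  - rewrite HP. unfold Rdiv. ring.
Qed.

Lemma stage2 u : u <> 0 -> u <> 2 -> u^4 - 4*u^2 + 32*u - 28 <> 0 -> u + 1 <> 0 -> C0p u <> 0 ->
  POLY (t10 u) (y10 u) (Y1 u / T1 u) (W1 u / T1 u) = 0.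
Proof.
  intros H0 H2 HQ H1 HC. pose proof (Dnz u) as HD. pose proof (Anz u) as HA.
  assert (H2' : u - 2 <> 0) by lra.
  unfold POLY, t10, y10, r10, Y1, T1, W1, W1p, Ep, C0p in *.
  field; nz.
Qed.

Theorem mainTheorem10 :
  forall s : R,
    s <> 0 -> s <> 2 ->
    s^4 - 4*s^2 + 32*s - 28 <> 0 ->
    s^2 + 4*s + 6 <> 0 ->
    Derive t10 s <> 0 ->
    t10 s <> 0 -> t10 s <> 1 ->
    y10 s <> 0 -> y10 s <> 1 -> y10 s <> t10 s ->
    PVI_param_holds (1/3) (1/2) (1/2) (2/3) t10 y10 s.
Proof.
  intros s H0 H2 HQ HD HdT Ht0 Ht1 Hy0 Hy1 Hyt.
  assert (EY := is_derive_unique _ _ _ (dY s H0 H2 HQ)).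
  assert (ET := is_derive_unique _ _ _ (dT s H0 H2)).
  rewrite ET in HdT.
  assert (H1 : s + 1 <> 0).
  { intro Hx. apply HdT. unfold T1. rewrite Hx. unfold Rdiv. ring. }
  assert (HC : C0p s <> 0).
  { intro Hx. apply HdT. unfold T1. rewrite Hx. unfold Rdiv. ring. }
  assert (EW : Derive (fun u => Derive y10 u / Derive t10 u) s = W1 s).
  { apply is_derive_unique. apply (is_derive_ext_loc W).
    - assert (L0 := loc_nz (fun u => u) s ltac:(auto_derive; auto) H0).
      assert (L2 := loc_nz (fun u => u - 2) s ltac:(auto_derive; auto) ltac:(intro; apply H2; lra)).
      assert (LQ := loc_nz (fun u => u^4 - 4*u^2 + 32*u - 28) s ltac:(auto_derive; auto) HQ).
      generalize (filter_and _ _ L0 (filter_and _ _ L2 LQ)).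
      apply filter_imp. intros u [A0 [A2 AQ]]. simpl in *.
      unfold W.
      rewrite (is_derive_unique _ _ _ (dY u A0 ltac:(intro; apply A2; lra) AQ)).
      rewrite (is_derive_unique _ _ _ (dT u A0 ltac:(intro; apply A2; lra))).
      reflexivity.
    - apply dW; auto. }
  unfold PVI_param_holds. cbv zeta.
  rewrite EW, EY, ET.
  apply stage1; auto.
  apply stage2; auto.
Qed.
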